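(* Let $\sigma$ be a unary implicit signature containing $\kappa$, let $X$ be a finite alphabet and let $K,L\subseteq X^+$ be rational languages. Then, with closures taken in $\Omega^\sigma_X\mathsf S$, $\overline{KL}=\overline{K}\,\overline{L}$.
   Context: $\mathsf S$ is the pseudovariety of all finite semigroups; $\overline{\Omega}_X\mathsf S$ is the free profinite semigroup on $X$ (containing $X^+$), and $\Omega^\sigma_X\mathsf S$ is its subalgebra generated by $X$ under the operations of $\sigma$, with the induced topology. $\widehat{\mathbb N}$ is the profinite completion of $(\mathbb N,+)$. A unary implicit signature is one consisting of multiplication together with at least one, and possibly several, unary operations $x\mapsto x^\alpha$ with $\alpha\in\widehat{\mathbb N}\setminus\mathbb N$; $\kappa$ is the signature consisting of multiplication and the $(\omega-1)$-power. *)

(* Defs.v *)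
From mathcomp Require Import all_boot.
Set Implicit Arguments. Unset Strict Implicit. Unset Printing Implicit Defensive.

Record fsg := FSG {
  fsg_car :> finType;
  fsg_op : fsg_car -> fsg_car -> fsg_car;
  fsg_assoc : associative fsg_op }.

Definition fsg_hom (S T : fsg) (h : S -> T) : Prop :=
  forall x y, h (fsg_op x y) = fsg_op (h x) (h y).

Record fmon := FMon {
  fmon_car :> finType;
  fmon_op : fmon_car -> fmon_car -> fmon_car;
  fmon_one : fmon_car;
  fmon_assoc : associative fmon_op;
  fmon_mul1 : left_id fmon_one fmon_op;
  fmon_mulr1 : right_id fmon_one fmon_op }.

Definition fmon_hom (M N : fmon) (h : M -> N) : Prop :=
  h (fmon_one M) = fmon_one N /\
  forall x y, h (fmon_op x y) = fmon_op (h x) (h y).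

Definition mpow (M : fmon) (m : M) (n : nat) : M := iter n (fmon_op m) (fmon_one M).

(* The profinite completion of (N,+): free profinite monoid on one     *)
(* generator, modelled as unary implicit operations on finite monoids  *)
(* (natural families alpha_M : M -> M, i.e. m |-> m^alpha).            *)

Record Nhat := NHat {
  nh_fun : forall M : fmon, M -> M;
  nh_nat : forall (M N : fmon) (h : M -> N), fmon_hom h ->
             forall m, h (nh_fun m) = nh_fun (h m) }.

Definition nh_nonnat (a : Nhat) : Prop :=
  forall n : nat, exists (M : fmon) (m : M), nh_fun a m <> mpow m n.

Definition nh_is_omega_minus_one (a : Nhat) : Prop :=
  forall (M : fmon) (m : M), nh_fun a m = mpow m ((#|M|.+1)`!).-1.

Definition op1 (S : fsg) (a b : option S) : option S :=
  match a, b with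
  | None, _ => b
  | _, None => a
  | Some x, Some y => Some (fsg_op x y)
  end.

Lemma op1_assoc (S : fsg) : associative (@op1 S).
Proof. by case=> [x|] [y|] [z|] //=; rewrite fsg_assoc. Qed.
Lemma op1_mul1 (S : fsg) : left_id None (@op1 S).
Proof. by case. Qed.
Lemma op1_mulr1 (S : fsg) : right_id None (@op1 S).
Proof. by case. Qed.

Definition S1 (S : fsg) : fmon :=
  @FMon (option S) (@op1 S) None (@op1_assoc S) (@op1_mul1 S) (@op1_mulr1 S).

(* x ^ alpha in a finite semigroup S, computed in S^1
   (for non-natural alpha the value always lies in S) *)
Definition pow_val (a : Nhat) (S : fsg) (x : S) : S :=
  match @nh_fun a (S1 S) (Some x) with Some y => y | None => x end.

(* The free profinite semigroup on X, modelled as X-ary implicit       *)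
(* operations on finite semigroups                                     *)

Record io (X : Type) := IO {
  io_fun : forall S : fsg, (X -> S) -> S;
  io_nat : forall (S T : fsg) (h : S -> T), fsg_hom h ->
             forall phi, h (io_fun phi) = io_fun (h \o phi) }.

Section IOops.
Variable X : Type.

Lemma io_letter_nat (x : X) (S T : fsg) (h : S -> T) :
  fsg_hom h -> forall phi : X -> S, h (phi x) = (h \o phi) x.
Proof. by []. Qed.

Definition io_letter (x : X) : io X :=
  @IO X (fun S phi => phi x) (fun S T h hh phi => @io_letter_nat x S T h hh phi).

Lemma io_mul_nat (f g : io X) (S T : fsg) (h : S -> T) :
  fsg_hom h -> forall phi : X -> S,
  h (fsg_op (io_fun f phi) (io_fun g phi)) =
  fsg_op (io_fun f (h \o phi)) (io_fun g (h \o phi)).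
Proof. by move=> hh phi; rewrite hh (io_nat f hh) (io_nat g hh). Qed.

Definition io_mul (f g : io X) : io X :=
  @IO X (fun S phi => fsg_op (io_fun f phi) (io_fun g phi))
        (fun S T h hh phi => @io_mul_nat f g S T h hh phi).

Lemma S1_hom (S T : fsg) (h : S -> T) : fsg_hom h ->
  @fmon_hom (S1 S) (S1 T) (omap h).
Proof. by move=> hh; split=> // [[x|] [y|]] //=; rewrite hh. Qed.

Lemma io_pow_nat (a : Nhat) (f : io X) (S T : fsg) (h : S -> T) :
  fsg_hom h -> forall phi : X -> S,
  h (pow_val a (io_fun f phi)) = pow_val a (io_fun f (h \o phi)).
Proof.
move=> hh phi; rewrite -(io_nat f hh) /pow_val.
have := @nh_nat a (S1 S) (S1 T) (omap h) (S1_hom hh) (Some (io_fun f phi)).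
move=> E; rewrite -E.
by case: (@nh_fun a (S1 S) (Some (io_fun f phi))).
Qed.

Definition io_pow (a : Nhat) (f : io X) : io X :=
  @IO X (fun S phi => pow_val a (io_fun f phi))
        (fun S T h hh phi => @io_pow_nat a f S T h hh phi).

(* the nonempty word x :: s of X^+ as an element of the free profinite semigroup *)
Fixpoint io_word (x : X) (s : seq X) : io X :=
  match s with
  | [::] => io_letter x
  | y :: s' => io_mul (io_letter x) (io_word y s')
  end.

(* Omega^sigma_X S: the subalgebra generated by X under multiplication and
   the powers alpha with sig alpha *)
Inductive in_sigma (sig : Nhat -> Prop) : io X -> Prop :=
  | in_sigma_letter x : in_sigma sig (io_letter x)
  | in_sigma_mul f g : in_sigma sig f -> in_sigma sig g -> in_sigma sig (io_mul f g)
  | in_sigma_pow a f : sig a -> in_sigma sig f -> in_sigma sig (io_pow a f).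

(* Topology: the initial topology for the evaluation maps
   f |-> f_S(phi) into finite discrete semigroups.  A basic neighbourhood of
   f is given by a finite list N of pairs (S, phi); g lies in it iff g agrees
   with f at every pair of N. *)
Fixpoint agree (f g : io X) (N : seq {S : fsg & X -> S}) : Prop :=
  match N with
  | [::] => True
  | p :: N' => io_fun f (projT2 p) = io_fun g (projT2 p) /\ agree f g N'
  end.

Definition closure_in (P A : io X -> Prop) (f : io X) : Prop :=
  P f /\ forall N, exists g, A g /\ agree g f N.

Definition plus_lang (K : seq X -> Prop) : Prop := forall w, K w -> w <> [::].

Definition cat_lang (K L : seq X -> Prop) : seq X -> Prop :=
  fun w => exists u v, K u /\ L v /\ w = u ++ v.

Definition lang_img (K : seq X -> Prop) : io X -> Prop :=
  fun f => exists x s, K (x :: s) /\ f = io_word x s.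

Definition set_mul (A B : io X -> Prop) : io X -> Prop :=
  fun f => exists g h, A g /\ B h /\ f = io_mul g h.

Inductive rexp :=
  | RVoid | REps | RLit of X | RUnion of rexp & rexp | RCat of rexp & rexp
  | RStar of rexp.

Inductive rmatch : rexp -> seq X -> Prop :=
  | rm_eps : rmatch REps [::]
  | rm_lit x : rmatch (RLit x) [:: x]
  | rm_unionl e f w : rmatch e w -> rmatch (RUnion e f) w
  | rm_unionr e f w : rmatch f w -> rmatch (RUnion e f) w
  | rm_cat e f u v : rmatch e u -> rmatch f v -> rmatch (RCat e f) (u ++ v)
  | rm_star0 e : rmatch (RStar e) [::]
  | rm_starS e u v : rmatch e u -> rmatch (RStar e) v -> rmatch (RStar e) (u ++ v).

Definition rational (K : seq X -> Prop) : Prop :=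
  exists e, forall w, K w <-> rmatch e w.

End IOops.

(* Main.v *)
Require Import Defs.
From mathcomp Require Import all_boot.
From mathcomp Require Import zify.
From Stdlib Require Import Classical ClassicalEpsilon FunctionalExtensionality ProofIrrelevance.
Set Implicit Arguments. Unset Strict Implicit. Unset Printing Implicit Defensive.

Definition pb (P : Prop) : bool :=
  if excluded_middle_informative P then true else false.
Lemma pbP (P : Prop) : pb P = true <-> P.
Proof. rewrite /pb; case: excluded_middle_informative => //. Qed.

Lemma mpowS (M : fmon) (m : M) n : mpow m n.+1 = fmon_op m (mpow m n).
Proof. by []. Qed.
Lemma mpow0 (M : fmon) (m : M) : mpow m 0 = fmon_one M.
Proof. by []. Qed.
Lemma mpowD (M : fmon) (m : M) a b :
  mpow m (a + b) = fmon_op (mpow m a) (mpow m b).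
Proof.
elim: a => [|a IH]; first by rewrite add0n mpow0 fmon_mul1.
by rewrite addSn !mpowS IH fmon_assoc.
Qed.
Lemma mpow_comm (M : fmon) (m : M) a b :
  fmon_op (mpow m a) (mpow m b) = fmon_op (mpow m b) (mpow m a).
Proof. by rewrite -!mpowD addnC. Qed.
Lemma mpow_hom (M N : fmon) (h : M -> N) : fmon_hom h ->
  forall m n, h (mpow m n) = mpow (h m) n.
Proof. case=> h1 hM m; elim=> [|n IH] //=. by rewrite hM IH. Qed.

Section Sub.
Variables (M : fmon) (P : pred M).
Hypotheses (P1 : P (fmon_one M)) (PM : forall x y, P x -> P y -> P (fmon_op x y)).
Definition subT := {x : M | P x}.
Definition subop (a b : subT) : subT := exist _ (fmon_op (val a) (val b)) (PM (valP a) (valP b)).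
Definition subone : subT := exist _ (fmon_one M) P1.
Lemma subop_assoc : associative subop.
Proof. by move=> a b c; apply: val_inj; rewrite /= fmon_assoc. Qed.
Lemma subop_mul1 : left_id subone subop.
Proof. by move=> a; apply: val_inj; rewrite /= fmon_mul1. Qed.
Lemma subop_mulr1 : right_id subone subop.
Proof. by move=> a; apply: val_inj; rewrite /= fmon_mulr1. Qed.
Definition subM : fmon := @FMon subT subop subone subop_assoc subop_mul1 subop_mulr1.
Lemma subM_hom : @fmon_hom subM M val.
Proof. by split. Qed.
Lemma nh_sub (a : Nhat) (m : M) : P m -> P (nh_fun a m).
Proof.
move=> Pm; have := @nh_nat a subM M val subM_hom (exist _ m Pm).
by move=> /= <-; exact: valP.
Qed.
End Sub.

Lemma pow_in (a : Nhat) (M : fmon) (m : M) : exists j, nh_fun a m = mpow m j.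
Proof.
pose P := fun y : M => pb (exists n, y = mpow m n).
have P1 : P (fmon_one M) by apply/pbP; exists 0.
have PM : forall x y, P x -> P y -> P (fmon_op x y).
  move=> x y /pbP [i ->] /pbP [j ->]; apply/pbP; exists (i + j); by rewrite mpowD.
have Pm : P m by apply/pbP; exists 1; rewrite /= fmon_mulr1.
by have /pbP := nh_sub P1 PM a Pm.
Qed.

Section ProdM.
Variables (M N : fmon).
Definition pmop (a b : M * N) := (fmon_op a.1 b.1, fmon_op a.2 b.2).
Lemma pmop_assoc : associative pmop.
Proof. by move=> [a1 a2] [b1 b2] [c1 c2]; rewrite /pmop /= !fmon_assoc. Qed.
Lemma pmop_mul1 : left_id (fmon_one M, fmon_one N) pmop.
Proof. by move=> [a1 a2]; rewrite /pmop /= !fmon_mul1. Qed.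
Lemma pmop_mulr1 : right_id (fmon_one M, fmon_one N) pmop.
Proof. by move=> [a1 a2]; rewrite /pmop /= !fmon_mulr1. Qed.
Definition prodM : fmon := @FMon (M * N)%type pmop (fmon_one M, fmon_one N) pmop_assoc pmop_mul1 pmop_mulr1.
Lemma fst_homM : @fmon_hom prodM M fst. Proof. by split. Qed.
Lemma snd_homM : @fmon_hom prodM N snd. Proof. by split. Qed.
End ProdM.

Lemma mpow_shift1 (M : fmon) (m : M) a d :
  mpow m (a + d) = mpow m a -> forall n, a <= n -> mpow m (n + d) = mpow m n.
Proof.
move=> E n an; have -> : n + d = (n - a) + (a + d) by rewrite addnA subnK.
by rewrite mpowD E -mpowD subnK.
Qed.
Lemma mpow_shift (M : fmon) (m : M) a d :
  mpow m (a + d) = mpow m a -> forall n t, a <= n -> mpow m (n + t * d) = mpow m n.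
Proof.
move=> E n t an; elim: t => [|t IH]; first by rewrite mul0n addn0.
rewrite mulSnr addnA (mpow_shift1 E) //; apply: leq_trans an (leq_addr _ _).
Qed.

Lemma mper (M : fmon) (y : M) j r : #|M| <= j ->
  mpow y (j + r * (#|M|.+1)`!) = mpow y j.
Proof.
move=> hj.
pose f := fun i : 'I_(#|M|.+1) => mpow y i.
have : ~ injective f.
  move=> /leq_card; rewrite card_ord ltnn //.
move=> ninj; have [i Hi] := not_all_ex_not _ _ ninj.
have [i' Hi'] := not_all_ex_not _ _ Hi.
have [Ef Ne] := imply_to_and _ _ Hi'.
have [a [b [ab [Eab bM]]]] : exists a b, a < b /\ mpow y b = mpow y a /\ b <= #|M|.
  rewrite /f in Ef; case: (ltngtP i i') => h.
  - by exists i, i'; split=> //; split; [by []| rewrite -ltnS].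
  - by exists i', i; split=> //; split; [by []| rewrite -ltnS].
  - by case: Ne; apply: val_inj.
have E : mpow y (a + (b - a)) = mpow y a by rewrite subnKC // ltnW.
have hd : b - a %| (#|M|.+1)`!.
  apply: dvdn_fact; rewrite subn_gt0 ab /=; apply: leq_trans (leq_subr _ _) _.
  by apply: leq_trans bM _.
case/dvdnP: hd => q ->.
rewrite mulnA (mpow_shift E) //; apply: leq_trans hj; apply: leq_trans (ltnW ab) bM.
Qed.

Lemma NN (a : Nhat) : nh_nonnat a -> forall (M : fmon) (m : M) B,
  exists k, B <= k /\ nh_fun a m = mpow m k.
Proof.
move=> nn M m B; have [j Ej] := pow_in a m.
have [d [d0 Ed]] : exists d, 0 < d /\ mpow m (j + d) = mpow m j.
  apply: NNPP => H.
  have H' : forall d, 0 < d -> mpow m (j + d) <> mpow m j.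
    by move=> d d0 E; apply: H; exists d.
  have [M' [m' Hne]] := nn j.
  have [s Es] := pow_in a (M := prodM M M') (m, m').
  have E1 := @nh_nat a (prodM M M') M fst (@fst_homM M M') (m, m').
  have E2 := @nh_nat a (prodM M M') M' snd (@snd_homM M M') (m, m').
  rewrite Es !(mpow_hom (@fst_homM M M')) !(mpow_hom (@snd_homM M M')) /= in E1 E2.
  have Esj : mpow m s = mpow m j by rewrite E1 Ej.
  have sj : s = j.
    case: (ltngtP s j) => // h.
    - exfalso; refine (H' (j - s) _ _); first by rewrite subn_gt0.
      by rewrite mpowD -Esj -mpowD subnKC ?(ltnW h) // Esj.
    - exfalso; refine (H' (s - j) _ _); first by rewrite subn_gt0.
      by rewrite subnKC ?(ltnW h) // Esj.
  by apply: Hne; rewrite -E2 sj.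
exists (j + B * d); split; first by apply: leq_trans (leq_addl _ _); rewrite leq_pmulr.
by rewrite Ej (mpow_shift Ed).
Qed.

Lemma io_ext (X : Type) (f g : io X) :
  (forall (S : fsg) (phi : X -> S), io_fun f phi = io_fun g phi) -> f = g.
Proof.
case: f => f Hf; case: g => g Hg /= E.
have efg : f = g.
  apply: functional_extensionality_dep => S; apply: functional_extensionality => phi.
  exact: E.
subst g; f_equal; apply: proof_irrelevance.
Qed.

Definition wv (X : Type) (S : fsg) (phi : X -> S) x s := io_fun (io_word x s) phi.
Lemma wv_nil X (S : fsg) (phi : X -> S) x : wv phi x [::] = phi x. Proof. by []. Qed.
Lemma wv_cons X (S : fsg) (phi : X -> S) x y s :
  wv phi x (y :: s) = fsg_op (phi x) (wv phi y s).
Proof. by []. Qed.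
Lemma wv_cat X (S : fsg) (phi : X -> S) x s y t :
  wv phi x (s ++ y :: t) = fsg_op (wv phi x s) (wv phi y t).
Proof.
elim: s x => [|z s IH] x //=.
by rewrite !wv_cons IH fsg_assoc.
Qed.

Lemma in_sigma_word X (sig : Nhat -> Prop) x s : in_sigma sig (@io_word X x s).
Proof.
elim: s x => [|y s IH] x /=; first by constructor.
by constructor; [constructor|].
Qed.

Section ProdS.
Variables (A B : fsg).
Definition psop (a b : A * B) := (fsg_op a.1 b.1, fsg_op a.2 b.2).
Lemma psop_assoc : associative psop.
Proof. by move=> [a1 a2] [b1 b2] [c1 c2]; rewrite /psop /= !fsg_assoc. Qed.
Definition prodS : fsg := @FSG (A * B)%type psop psop_assoc.
Lemma fst_hom : @fsg_hom prodS A fst. Proof. by []. Qed.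
Lemma snd_hom : @fsg_hom prodS B snd. Proof. by []. Qed.
End ProdS.

Definition unitS : fsg := @FSG unit (fun _ _ => tt) (fun _ _ _ => erefl).
Definition nullS : fsg := @FSG bool (fun _ _ => false) (fun _ _ _ => erefl).

Lemma io_fst X (A B : fsg) (f : io X) (p1 : X -> A) (p2 : X -> B) :
  (io_fun f (S := prodS A B) (fun x => (p1 x, p2 x))).1 = io_fun f p1.
Proof. exact: (io_nat f (@fst_hom A B)). Qed.
Lemma io_snd X (A B : fsg) (f : io X) (p1 : X -> A) (p2 : X -> B) :
  (io_fun f (S := prodS A B) (fun x => (p1 x, p2 x))).2 = io_fun f p2.
Proof. exact: (io_nat f (@snd_hom A B)). Qed.

Definition spow (S : fsg) (x : S) n := iter n (fsg_op x) x.
Lemma mpow_some (S : fsg) (x : S) n :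
  mpow (M := S1 S) (Some x) n.+1 = Some (spow x n).
Proof. by elim: n => [|n IH] //; rewrite mpowS IH. Qed.

Lemma pow_val_eq (a : Nhat) (S : fsg) (v z : S) :
  nh_fun a (M := S1 S) (Some v) = Some z -> pow_val a v = z.
Proof. by rewrite /pow_val => ->. Qed.

Lemma pow_val_NN (a : Nhat) : nh_nonnat a -> forall (S : fsg) (v : S) B,
  exists k, B <= k /\ Some (pow_val a v) = mpow (M := S1 S) (Some v) k.+1.
Proof.
move=> nn S v B; have [k [Bk E]] := NN nn (M := S1 S) (Some v) B.+1.
exists k.-1; split; first by rewrite -ltnS prednK //; apply: leq_trans Bk.
rewrite prednK; last by apply: leq_trans Bk.
case: k Bk E => [//|k] _ E; rewrite mpow_some.
by rewrite (@pow_val_eq a S v (spow v k)) // E mpow_some.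
Qed.

Lemma realize X (sig : Nhat -> Prop) (sig_unary : forall a, sig a -> nh_nonnat a)
  (f : io X) : in_sigma sig f -> forall (S : fsg) (phi : X -> S),
  exists x s, io_fun f phi = wv phi x s.
Proof.
elim=> [x|g h _ IHg _ IHh|a g sa _ IHg] S phi.
- by exists x, [::].
- have [x [s Es]] := IHg S phi; have [y [t Et]] := IHh S phi.
  by exists x, (s ++ y :: t); rewrite wv_cat /= Es Et.
- have [x [s Es]] := IHg S phi.
  have [k [_ Ek]] := pow_val_NN (sig_unary a sa) (io_fun g phi) 0.
  have Ek' : pow_val a (io_fun g phi) = spow (io_fun g phi) k.
    by move: Ek; rewrite mpow_some => -[].
  change (exists x0 s0, pow_val a (io_fun g phi) = wv phi x0 s0).
  rewrite Ek' Es; clear Ek Ek'.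
  suff [s' ->] : exists s', spow (wv phi x s) k = wv phi x s' by exists x, s'.
  elim: k => [|k [s' IH]]; first by exists s.
  by exists (s ++ x :: s'); rewrite wv_cat -IH.
Qed.

Fixpoint prodL X (N : seq {S : fsg & X -> S}) : fsg :=
  match N with [::] => unitS | p :: N' => prodS (projT1 p) (prodL N') end.
Fixpoint prodPhi X (N : seq {S : fsg & X -> S}) : X -> prodL N :=
  match N return X -> prodL N with
  | [::] => fun _ => tt
  | p :: N' => fun x => (projT2 p x, prodPhi N' x) end.

Lemma agree_prod X (f g : io X) N :
  io_fun f (prodPhi N) = io_fun g (prodPhi N) -> agree f g N.
Proof.
elim: N => [//|[S phi] N IH] /= E; split.
- by rewrite -(io_fst f phi (prodPhi N)) -(io_fst g phi (prodPhi N)) E.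
- by apply: IH; rewrite -(io_snd f phi (prodPhi N)) -(io_snd g phi (prodPhi N)) E.
Qed.

Section ClosChar.
Variables (X : Type) (sig : Nhat -> Prop) (sig_unary : forall a, sig a -> nh_nonnat a).
Variables (R : fsg) (phi : X -> R) (P : option R -> bool) (K : seq X -> Prop).
Hypothesis HK : forall x s, K (x :: s) <-> P (Some (wv phi x s)).

Lemma clos_char1 g : in_sigma sig g -> P (Some (io_fun g phi)) ->
  closure_in (in_sigma sig) (lang_img K) g.
Proof.
move=> ig Pg; split=> // N.
have [x [s E]] := realize sig_unary ig (prodPhi (existT _ R phi :: N)).
have E' : io_fun (S := prodS R (prodL N)) g (fun y => (phi y, prodPhi N y)) =
  io_fun (io_word x s) (S := prodS R (prodL N)) (fun y => (phi y, prodPhi N y)) := E.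
exists (io_word x s); split.
- exists x, s; split=> //; apply/HK.
  by rewrite /wv -(io_fst _ phi (prodPhi N)) -E' io_fst.
- apply: agree_prod.
  by rewrite -(io_snd _ phi (prodPhi N)) -E' io_snd.
Qed.

Lemma clos_char2 g : closure_in (in_sigma sig) (lang_img K) g -> P (Some (io_fun g phi)).
Proof.
case=> _ /(_ [:: existT _ R phi]) [h [[x [s [Ks ->]]] [E _]]].
by rewrite /= -E; apply/HK.
Qed.
End ClosChar.

Section Cut.
Variable M : fsg.
Definition cutT := (M * {set M * M})%type.
Definition cutop (a b : cutT) : cutT :=
  (fsg_op a.1 b.1,
   [set p | [exists q in a.2, p == (q.1, fsg_op q.2 b.1)]
         || [exists q in b.2, p == (fsg_op a.1 q.1, q.2)] || (p == (a.1, b.1))]).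
Lemma mem_cutop (a b : cutT) p : p \in (cutop a b).2 <->
  (exists q, q \in a.2 /\ p = (q.1, fsg_op q.2 b.1)) \/
  (exists q, q \in b.2 /\ p = (fsg_op a.1 q.1, q.2)) \/ p = (a.1, b.1).
Proof.
rewrite inE; split.
- case/orP => [/orP [] /existsP [q /andP [Hq /eqP E]]|/eqP E].
  + by left; exists q.
  + by right; left; exists q.
  + by right; right.
- case=> [[q [Hq E]]|[[q [Hq E]]|E]]; apply/orP.
  + by left; apply/orP; left; apply/existsP; exists q; rewrite Hq E eqxx.
  + by left; apply/orP; right; apply/existsP; exists q; rewrite Hq E eqxx.
  + by right; rewrite E.
Qed.
Lemma cutop_assoc : associative cutop.
Proof.
move=> a b c; congr pair; first by rewrite /= fsg_assoc.
apply/setP => p; apply/idP/idP => /mem_cutop H; apply/mem_cutop.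
- case: H => [[q [Hq ->]]|[[q [Hq ->]]| ->]].
  + left; exists (q.1, fsg_op q.2 b.1); split; last by rewrite /= fsg_assoc.
    by apply/mem_cutop; left; exists q.
  + case/mem_cutop: Hq => [[r [Hr ->]]|[[r [Hr ->]]| ->]].
    * left; exists (fsg_op a.1 r.1, r.2); split=> //.
      by apply/mem_cutop; right; left; exists r.
    * by right; left; exists r; split=> //; rewrite /= fsg_assoc.
    * by right; right.
  + left; exists (a.1, b.1); split=> //; by apply/mem_cutop; right; right.
- case: H => [[q [Hq ->]]|[[q [Hq ->]]| ->]].
  + case/mem_cutop: Hq => [[r [Hr ->]]|[[r [Hr ->]]| ->]].
    * by left; exists r; split=> //; rewrite /= fsg_assoc.
    * right; left; exists (r.1, fsg_op r.2 c.1); split=> //.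
      by apply/mem_cutop; left; exists r.
    * by right; right.
  + right; left; exists (fsg_op b.1 q.1, q.2); split; last by rewrite /= fsg_assoc.
    by apply/mem_cutop; right; left; exists q.
  + right; left; exists (b.1, c.1); split => //; by apply/mem_cutop; right; right.
Qed.
Definition CutS : fsg := @FSG (M * {set M * M})%type cutop cutop_assoc.
End Cut.

Definition cutphi X (M : fsg) (phi : X -> M) : X -> CutS M := fun x => (phi x, set0).
Lemma cut_fst_hom (M : fsg) : @fsg_hom (CutS M) M fst. Proof. by []. Qed.
Lemma cut_fst X (M : fsg) (phi : X -> M) (f : io X) :
  (io_fun f (cutphi phi)).1 = io_fun f phi.
Proof. exact: (io_nat f (@cut_fst_hom M)). Qed.

Lemma wcut X (M : fsg) (phi : X -> M) x s a b :
  (a, b) \in (wv (cutphi phi) x s).2 <->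
  exists x1 s1 x2 s2, x :: s = (x1 :: s1) ++ (x2 :: s2) /\
    a = wv phi x1 s1 /\ b = wv phi x2 s2.
Proof.
elim: s x a b => [|y s IH] x a b.
- split; first by rewrite /= inE.
  by case=> x1 [s1 [x2 [s2 [/= [_ /(congr1 size)] ]]]]; rewrite size_cat /= addnS.
- rewrite wv_cons; split.
  + case/mem_cutop => [[q [/=]]|[[q [Hq [E1 E2]]]| [E1 E2]]]; first by rewrite inE.
    * case: q Hq E1 E2 => [q1 q2] /IH [x1 [s1 [x2 [s2 [E [-> ->]]]]]] E1 E2.
      exists x, (x1 :: s1), x2, s2; split; first by rewrite E.
      by rewrite E1 E2 /=.
    * exists x, [::], y, s; split=> //; split=> //.
      by rewrite E2; exact: cut_fst.
  + case=> x1 [s1 [x2 [s2 [E [-> ->]]]]]; case: E => <- E.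
    apply/mem_cutop; right; case: s1 E => [|z s1] /= E.
    * by case: E => <- <-; right; congr pair; rewrite /wv cut_fst.
    * case: E => <- Es; left; exists (wv phi y s1, wv phi x2 s2); split=> //.
      by apply/IH; exists y, s1, x2, s2; rewrite Es.
Qed.

From mathcomp Require Import zify.
Lemma mpow1 (M : fmon) (y : M) : mpow y 1 = y.
Proof. by rewrite /= fmon_mulr1. Qed.
Lemma mpowM (M : fmon) (y : M) a b : mpow (mpow y a) b = mpow y (a * b).
Proof. elim: b => [|b IH]; first by rewrite muln0. by rewrite mpowS IH -mpowD mulnS. Qed.
Lemma kc (M : fmon) (y : M) k r : #|M| <= k ->
  mpow y (k + ((#|M|.+1)`!).-1 * r + r) = mpow y k.
Proof.
move=> hk; rewrite -addnA -mulSnr prednK ?fact_gt0 // mulnC; exact: mper.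
Qed.

Lemma mpowSr (M : fmon) (y : M) i : fmon_op (mpow y i) y = mpow y i.+1.
Proof. by rewrite -addn1 mpowD mpow1. Qed.

Section Ids.
Variables (M : fmon) (y v1 v2 : M) (k : nat).
Hypotheses (Ev : fmon_op v1 v2 = y) (hk : #|M| <= k).
Local Notation c := ((#|M|.+1)`!).
Lemma idA1 i : fmon_op (fmon_op (mpow y i) v1)
   (fmon_op v2 (fmon_op (mpow y k) (mpow (mpow y c.-1) i.+1))) = mpow y k.
Proof.
rewrite -fmon_assoc [fmon_op v1 _]fmon_assoc Ev fmon_assoc mpowSr mpowM.
rewrite -!mpowD -(kc y i.+1 hk); congr mpow; lia.
Qed.
Lemma idA2 j : fmon_op (fmon_op (fmon_op (mpow y k) (mpow (mpow y c.-1) j.+1)) v1)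
   (fmon_op v2 (mpow y j)) = mpow y k.
Proof.
rewrite -fmon_assoc [fmon_op v1 _]fmon_assoc Ev -mpowS mpowM -!mpowD -(kc y j.+1 hk); congr mpow; lia.
Qed.
Lemma idB1 i : fmon_op (mpow y i) (fmon_op (mpow y k) (mpow (mpow y c.-1) i)) = mpow y k.
Proof. rewrite mpowM -!mpowD -(kc y i hk); congr mpow; lia. Qed.
Lemma idB2 j : fmon_op (fmon_op (mpow y k) (mpow (mpow y c.-1) j)) (mpow y j) = mpow y k.
Proof. rewrite mpowM -!mpowD -(kc y j hk); congr mpow; lia. Qed.
End Ids.

Definition npow X (g : io X) n := iter n (io_mul g) g.
Definition gpre X (g : io X) i g1 := if i is i'.+1 then io_mul (npow g i') g1 else g1.
Definition gsuf X (g : io X) j g2 := if j is j'.+1 then io_mul g2 (npow g j') else g2.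

Lemma in_npow X sig (g : io X) n : in_sigma sig g -> in_sigma sig (npow g n).
Proof. by move=> ig; elim: n => [|n IH] //=; constructor. Qed.
Lemma in_gpre X sig (g : io X) i g1 : in_sigma sig g -> in_sigma sig g1 -> in_sigma sig (gpre g i g1).
Proof. by case: i => [|i] //= ig ig1; constructor => //; apply: in_npow. Qed.
Lemma in_gsuf X sig (g : io X) j g2 : in_sigma sig g -> in_sigma sig g2 -> in_sigma sig (gsuf g j g2).
Proof. by case: j => [|j] //= ig ig2; constructor => //; apply: in_npow. Qed.

Section Vals.
Variables (X : Type) (S : fsg) (psi : X -> S).
Definition vS (f : io X) : S1 S := Some (io_fun f psi).
Lemma vS_mul g h : vS (io_mul g h) = fmon_op (vS g) (vS h). Proof. by []. Qed.
Lemma vS_npow g n : vS (npow g n) = mpow (vS g) n.+1.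
Proof. elim: n => [|n IH]; first by rewrite mpow1. by rewrite /= vS_mul IH. Qed.
Lemma vS_gpre g i g1 : vS (gpre g i g1) = fmon_op (mpow (vS g) i) (vS g1).
Proof. case: i => [|i]; first by rewrite fmon_mul1. by rewrite /= vS_mul vS_npow. Qed.
Lemma vS_gsuf g j g2 : vS (gsuf g j g2) = fmon_op (vS g2) (mpow (vS g) j).
Proof. case: j => [|j]; first by rewrite fmon_mulr1. by rewrite /= vS_mul vS_npow. Qed.
Lemma vS_pow (a : Nhat) g : nh_nonnat a -> vS (io_pow a g) = nh_fun a (vS g).
Proof.
move=> nn; have [k [k1 E]] := NN nn (vS g) 1.
case: k k1 E => [//|k] _; rewrite /vS mpow_some => E.
by rewrite /= (pow_val_eq E) E.
Qed.
Lemma vS_inj f g : vS f = vS g -> io_fun f psi = io_fun g psi.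
Proof. by case. Qed.
End Vals.

Lemma cutpow (M : fsg) (t : CutS M) n : exists u,
  mpow (M := S1 (CutS M)) (Some t) n.+1 = Some u /\
  Some u.1 = mpow (M := S1 M) (Some t.1) n.+1 /\
  forall a b, (a, b) \in u.2 ->
   (exists i j q, i + j = n /\ q \in t.2 /\
      Some a = @fmon_op (S1 M) (mpow (M := S1 M) (Some t.1) i) (Some q.1) /\
      Some b = @fmon_op (S1 M) (Some q.2) (mpow (M := S1 M) (Some t.1) j)) \/
   (exists i j, 0 < i /\ 0 < j /\ i + j = n.+1 /\
      Some a = mpow (M := S1 M) (Some t.1) i /\ Some b = mpow (M := S1 M) (Some t.1) j).
Proof.
elim: n => [|n [u [Eu [Eu1 Hu]]]].
- exists t; split; first by rewrite mpow1.
  split; first by rewrite mpow1.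
  by move=> a b Hab; left; exists 0, 0, (a, b).
- exists (cutop t u); split; first by rewrite mpowS Eu.
  split; first by rewrite mpowS -Eu1.
  move=> a b /mem_cutop [[q [Hq [-> ->]]]|[[q [Hq [-> ->]]]|[-> ->]]].
  + left; exists 0, n.+1, q; split=> //; split=> //.
    by rewrite fmon_mul1 -Eu1.
  + case: q Hq => q1 q2 /Hu [[i [j [q' [Eij [Hq' [Ea Eb]]]]]]|[i [j [i0 [j0 [Eij [Ea Eb]]]]]]].
    * left; exists i.+1, j, q'; split; first by rewrite addSn Eij.
      split=> //; split=> //.
      by rewrite mpowS -fmon_assoc -Ea.
    * right; exists i.+1, j; split=> //; split=> //; split; first by rewrite addSn Eij.
      by rewrite mpowS -Ea.
  + right; exists 1, n.+1; split=> //; split=> //; split=> //.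
Qed.

Definition psiw X (S : fsg) (phi : X -> S) (w : seq X) : S1 S :=
  match w with [::] => None | x :: s => Some (wv phi x s) end.
Lemma psiw_cons X (S : fsg) (phi : X -> S) x w :
  psiw phi (x :: w) = @fmon_op (S1 S) (Some (phi x)) (psiw phi w).
Proof. by case: w. Qed.
Lemma psiw_cat X (S : fsg) (phi : X -> S) u v :
  psiw phi (u ++ v) = @fmon_op (S1 S) (psiw phi u) (psiw phi v).
Proof.
elim: u => [|x u IH]; first by [].
by rewrite cat_cons !psiw_cons IH fmon_assoc.
Qed.
Definition recog X (K : seq X -> Prop) := exists (S : fsg) (phi : X -> S)
  (P : option S -> bool), forall w, K w <-> P (psiw phi w).

Set Implicit Arguments. Unset Strict Implicit. Unset Printing Implicit Defensive.

Lemma nh_some (a : Nhat) (S : fsg) (v : S) : nh_nonnat a ->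
  nh_fun a (M := S1 S) (Some v) = Some (pow_val a v).
Proof.
move=> nn; have [k [k1 E]] := NN nn (M := S1 S) (Some v) 1.
case: k k1 E => [//|k] _; rewrite mpow_some => E.
by rewrite (pow_val_eq E) E.
Qed.

Lemma vS_eq X (S : fsg) (psi : X -> S) f a : vS psi f = Some a -> io_fun f psi = a.
Proof. by case. Qed.

Section Core.
Variables (X : Type) (sig : Nhat -> Prop) (sig_unary : forall a, sig a -> nh_nonnat a).
Variables (a0 : Nhat) (sa0 : sig a0) (ka0 : nh_is_omega_minus_one a0).
Variables (M : fsg) (phi : X -> M).

Lemma core f : in_sigma sig f -> forall a b,
  (a, b) \in (io_fun f (cutphi phi)).2 ->
  exists g h, [/\ in_sigma sig g, in_sigma sig h, f = io_mul g h,
    io_fun g phi = a & io_fun h phi = b].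
Proof.
elim=> [x|g h ig IHg ih IHh|al g sal ig IHg] a b.
- by rewrite /= inE.
- move/mem_cutop => [[[q1 q2] [Hq [-> ->]]]|[[[q1 q2] [Hq [-> ->]]]|[-> ->]]].
  + have [g1 [g2 [ig1 ig2 Eg E1 E2]]] := IHg _ _ Hq.
    exists g1, (io_mul g2 h); split=> //; first by constructor.
    * by rewrite Eg; apply: io_ext => S psi /=; rewrite fsg_assoc.
    * by rewrite /= E2 cut_fst.
  + have [h1 [h2 [ih1 ih2 Eh E1 E2]]] := IHh _ _ Hq.
    exists (io_mul g h1), h2; split=> //; first by constructor.
    * by rewrite Eh; apply: io_ext => S psi /=; rewrite fsg_assoc.
    * by rewrite /= E1 cut_fst.
  + by exists g, h; split=> //; rewrite cut_fst.
- move=> Hab.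
  have nn := sig_unary sal; have nn0 := sig_unary sa0.
  set t := io_fun g (cutphi phi) in Hab.
  set m := io_fun g phi.
  have tm : t.1 = m by rewrite /t cut_fst.
  have [k [Bk Ek]] := pow_val_NN nn t (#|S1 M|).*2.
  have [u [Eu [Eu1 Hu]]] := cutpow t k.
  have Hab' : (a, b) \in u.2.
    by move: Ek; rewrite Eu => -[<-].
  have EalM : nh_fun al (M := S1 M) (vS phi g) = mpow (vS phi g) k.+1.
    have := @nh_nat al _ _ _ (S1_hom (@cut_fst_hom M)) (Some t).
    rewrite nh_some // Ek (mpow_hom (S1_hom (@cut_fst_hom M))) => E.
    rewrite /vS -/m -tm; exact: (esym E).
  have Ea0M := ka0 (vS phi g).
  rewrite tm in Eu1 Hu.
  have ym : Some m = vS phi g by [].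
  case/Hu: Hab' => [[i [j [[q1 q2] [Eij [Hq [Ea Eb]]]]]]|[i [j [i0 [j0 [Eij [Ea Eb]]]]]]].
  + have [g1 [g2 [ig1 ig2 Eg E1 E2]]] := IHg _ _ Hq.
    have Ev : forall (S : fsg) (psi : X -> S), fmon_op (vS psi g1) (vS psi g2) = vS psi g.
      by move=> S psi; rewrite Eg.
    case: (leqP #|S1 M| j) => hj.
    * exists (gpre g i g1), (io_mul g2 (io_mul (io_pow al g) (npow (io_pow a0 g) i))).
      split.
      -- exact: in_gpre.
      -- apply: in_sigma_mul => //; apply: in_sigma_mul; first exact: in_sigma_pow.
         by apply: in_npow; apply: in_sigma_pow.
      -- apply: io_ext => S psi; apply: (@vS_inj _ _ psi).
         have [k' [hk' Ek']] := NN nn (vS psi g) #|S1 S|.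
         rewrite vS_mul vS_gpre !vS_mul vS_npow !vS_pow // Ek' ka0.
         by rewrite (idA1 (Ev S psi) hk').
      -- by apply: vS_eq; rewrite vS_gpre -ym Ea /vS E1.
      -- apply: vS_eq; rewrite !vS_mul vS_npow !vS_pow // EalM ka0 -ym.
         rewrite Eb {1}/vS E2 mpowM -mpowD -(kc _ i.+1 hj); do 2 f_equal; lia.
    * exists (io_mul (io_mul (io_pow al g) (npow (io_pow a0 g) j)) g1), (gsuf g j g2).
      split.
      -- apply: in_sigma_mul => //; apply: in_sigma_mul; first exact: in_sigma_pow.
         by apply: in_npow; apply: in_sigma_pow.
      -- exact: in_gsuf.
      -- apply: io_ext => S psi; apply: (@vS_inj _ _ psi).
         have [k' [hk' Ek']] := NN nn (vS psi g) #|S1 S|.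
         rewrite vS_mul vS_gsuf !vS_mul vS_npow !vS_pow // Ek' ka0.
         by rewrite (idA2 (Ev S psi) hk').
      -- apply: vS_eq; rewrite !vS_mul vS_npow !vS_pow // EalM ka0 -ym.
         have hi : #|S1 M| <= i by move: Bk; rewrite -addnn; lia.
         rewrite Ea /vS E1 mpowM -mpowD -(kc _ j.+1 hi); do 2 f_equal; lia.
      -- by apply: vS_eq; rewrite vS_gsuf -ym Eb /vS E2.
  + case: (leqP #|S1 M| j) => hj.
    * case: i i0 Eij Ea => [//|i] _ Eij Ea.
      exists (npow g i), (io_mul (io_pow al g) (npow (io_pow a0 g) i)).
      split.
      -- exact: in_npow.
      -- apply: in_sigma_mul; first exact: in_sigma_pow.
         by apply: in_npow; apply: in_sigma_pow.
      -- apply: io_ext => S psi; apply: (@vS_inj _ _ psi).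
         have [k' [hk' Ek']] := NN nn (vS psi g) #|S1 S|.
         rewrite !vS_mul !vS_npow !vS_pow // Ek' ka0.
         by rewrite (idB1 _ hk').
      -- by apply: vS_eq; rewrite vS_npow -ym Ea.
      -- apply: vS_eq; rewrite !vS_mul vS_npow !vS_pow // EalM ka0 -ym.
         rewrite Eb mpowM -mpowD -(kc _ i.+1 hj); f_equal; lia.
    * case: j j0 Eij Eb hj => [//|j] _ Eij Eb hj.
      exists (io_mul (io_pow al g) (npow (io_pow a0 g) j)), (npow g j).
      split.
      -- apply: in_sigma_mul; first exact: in_sigma_pow.
         by apply: in_npow; apply: in_sigma_pow.
      -- exact: in_npow.
      -- apply: io_ext => S psi; apply: (@vS_inj _ _ psi).
         have [k' [hk' Ek']] := NN nn (vS psi g) #|S1 S|.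
         rewrite !vS_mul !vS_npow !vS_pow // Ek' ka0.
         by rewrite (idB2 _ hk').
      -- apply: vS_eq; rewrite !vS_mul vS_npow !vS_pow // EalM ka0 -ym.
         have hi : #|S1 M| <= i by move: Bk; rewrite -addnn; lia.
         rewrite Ea mpowM -mpowD -(kc _ j.+1 hi); f_equal; lia.
      -- by apply: vS_eq; rewrite vS_npow -ym Eb.
Qed.
End Core.

Set Implicit Arguments. Unset Strict Implicit. Unset Printing Implicit Defensive.

Section Rec.
Variable X : eqType.

Lemma recog_ext (K K' : seq X -> Prop) : (forall w, K w <-> K' w) -> recog K -> recog K'.
Proof.
move=> E [S [phi [P H]]]; exists S, phi, P => w; rewrite -H; exact: iff_sym (E w).
Qed.

Lemma recog_void : recog (rmatch (RVoid X)).
Proof.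
exists unitS, (fun _ => tt), (fun _ => false) => w; split=> // H; inversion H.
Qed.

Lemma recog_eps : recog (rmatch (REps X)).
Proof.
exists unitS, (fun _ => tt), (fun o => if o is None then true else false) => w.
split=> [H|]; first by inversion H.
by case: w => // _; constructor.
Qed.

Lemma recog_lit (x0 : X) : recog (rmatch (RLit x0)).
Proof.
exists nullS, (fun y => y == x0), (fun o => o == Some true) => w.
split=> [H|]; first by inversion H; subst; rewrite /= /wv /= eqxx.
case: w => [//|x [|y s]] /=.
- by move/eqP => [/eqP ->]; constructor.
- by rewrite /wv /= => /eqP.
Qed.

Lemma recog_union (e f : rexp X) : recog (rmatch e) -> recog (rmatch f) -> recog (rmatch (RUnion e f)).
Proof.
move=> [S1' [phi1 [P1 H1]]] [S2' [phi2 [P2 H2]]].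
exists (prodS S1' S2'), (fun x => (phi1 x, phi2 x)),
  (fun o => P1 (omap fst o) || P2 (omap snd o)).
have E1 w : omap fst (psiw (S := prodS S1' S2') (fun x => (phi1 x, phi2 x)) w) = psiw phi1 w.
  by case: w => //= x s; rewrite /wv io_fst.
have E2 w : omap snd (psiw (S := prodS S1' S2') (fun x => (phi1 x, phi2 x)) w) = psiw phi2 w.
  by case: w => //= x s; rewrite /wv io_snd.
move=> w; rewrite E1 E2; split=> [H|/orP [/H1 H|/H2 H]].
- by inversion H; subst; apply/orP; [left; apply/H1|right; apply/H2].
- exact: rm_unionl.
- exact: rm_unionr.
Qed.

Lemma rmatch_cat (e f : rexp X) w :
  rmatch (RCat e f) w <-> exists u v, w = u ++ v /\ rmatch e u /\ rmatch f v.
Proof.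
split=> [H|[u [v [-> [Hu Hv]]]]]; last exact: rm_cat.
by inversion H; subst; exists u, v.
Qed.

Lemma recog_cat (e f : rexp X) : recog (rmatch e) -> recog (rmatch f) -> recog (rmatch (RCat e f)).
Proof.
move=> [S1' [phi1 [P1 H1]]] [S2' [phi2 [P2 H2]]].
pose Phi := fun x => (phi1 x, phi2 x) : prodS S1' S2'.
exists (CutS (prodS S1' S2')), (cutphi Phi),
  (fun (o : option (CutS (prodS S1' S2'))) => match o with
   | None => P1 None && P2 None
   | Some t => [|| P1 None && P2 (Some t.1.2), P1 (Some t.1.1) && P2 None |
                   [exists p in t.2, P1 (Some p.1.1) && P2 (Some p.2.2)]] end).
have tE1 x s : (wv (cutphi Phi) x s).1.1 = wv phi1 x s.
  by rewrite /wv cut_fst io_fst.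
have tE2 x s : (wv (cutphi Phi) x s).1.2 = wv phi2 x s.
  by rewrite /wv cut_fst io_snd.
have pE1 x s : (wv Phi x s).1 = wv phi1 x s by rewrite /wv io_fst.
have pE2 x s : (wv Phi x s).2 = wv phi2 x s by rewrite /wv io_snd.
move=> w; rewrite rmatch_cat; case: w => [|x s].
- split=> [[u [v [Ew [Hu Hv]]]]|/andP [h1 h2]].
  + case: u Ew Hu => [|? ?] Ew Hu; last discriminate.
    case: v Ew Hv => [|? ?] Ew Hv; last discriminate.
    by apply/andP; split; [apply/(H1 [::]) | apply/(H2 [::])].
  + by exists [::], [::]; split=> //; split; [apply/(H1 [::]) | apply/(H2 [::])].
- rewrite /= tE1 tE2; split.
  + case=> u [v [Ew [Hu Hv]]]; move/H1: Hu => Hu; move/H2: Hv => Hv.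
    case: u Ew Hu => [|x1 s1] Ew Hu.
    * by rewrite /= in Ew; subst v; rewrite Hu /= Hv.
    * case: v Ew Hv => [|x2 s2] Ew Hv.
      -- by rewrite cats0 in Ew; case: Ew => -> ->; rewrite Hu Hv /= orbT.
      -- apply/orP; right; apply/orP; right; apply/existsP.
         exists (wv Phi x1 s1, wv Phi x2 s2); apply/andP; split.
         ++ by apply: (proj2 (wcut Phi x s _ _)); exists x1, s1, x2, s2.
         ++ by rewrite /= pE1 pE2 Hu Hv.
  + case/orP => [/andP [h1 h2]|/orP [/andP [h1 h2]|/existsP [[p1 p2] /andP [Hp HP]]]].
    * by exists [::], (x :: s); split=> //; split; [apply/(H1 [::]) | apply/(H2 (x :: s))].
    * by exists (x :: s), [::]; rewrite cats0; split=> //; split; [apply/(H1 (x :: s)) | apply/(H2 [::])].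
    * case/andP: HP => /= HP1 HP2.
      have [x1 [s1 [x2 [s2 [Ew [E1 E2]]]]]] := (wcut Phi x s p1 p2).1 Hp.
      exists (x1 :: s1), (x2 :: s2); split=> //; split.
      -- by apply/H1; rewrite /= -pE1 -E1.
      -- by apply/H2; rewrite /= -pE2 -E2.
Qed.
End Rec.

Section RelS.
Variable O : finType.
Definition relop (A B : {set O * O}) : {set O * O} :=
  [set p | [exists z, ((p.1, z) \in A) && ((z, p.2) \in B)]].
Lemma mem_relop A B p q : (p, q) \in relop A B <-> exists z, (p, z) \in A /\ (z, q) \in B.
Proof.
rewrite inE; split=> [/existsP [z /andP [h1 h2]]|[z [h1 h2]]]; first by exists z.
by apply/existsP; exists z; rewrite h1 h2.
Qed.
Lemma relop_assoc : associative relop.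
Proof.
move=> A B C; apply/setP => [[p q]]; apply/idP/idP.
- case/mem_relop => z [h1 /mem_relop [z' [h2 h3]]].
  by apply/mem_relop; exists z'; split=> //; apply/mem_relop; exists z.
- case/mem_relop => z [/mem_relop [z' [h1 h2]] h3].
  by apply/mem_relop; exists z'; split=> //; apply/mem_relop; exists z.
Qed.
Definition RelS : fsg := @FSG {set O * O} relop relop_assoc.
End RelS.

Lemma rmatch_star_cat (X0 : Type) (e : rexp X0) m v :
  rmatch (RStar e) m -> rmatch (RStar e) v -> rmatch (RStar e) (m ++ v).
Proof.
intros H Hv. remember (RStar e) as e' eqn:Ee. revert Ee.
induction H; intros Ee; try discriminate.
- exact Hv.
- rewrite -catA. injection Ee as ->. apply: rm_starS => //. exact: IHrmatch2.
Qed.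

Section Star.
Variables (X0 : Type) (e : rexp X0) (S : fsg) (phi : X0 -> S) (P : option S -> bool).
Hypothesis HP : forall w, rmatch e w <-> P (psiw phi w).
Local Notation op := (@fmon_op (S1 S)).
Local Notation psi := (psiw phi).
Definition step x (p q : option S) : bool :=
  (q == op p (Some (phi x))) || (P p && (q == Some (phi x))).
Definition phiS x : RelS (option S) := [set pq | step x pq.1 pq.2].
Lemma opN (p : option S) : op p None = p. Proof. by case: p. Qed.
Lemma opN' (p : option S) : op None p = p. Proof. by []. Qed.
Fixpoint reach (p : option S) (w : seq X0) (q : option S) : Prop :=
  match w with [::] => q = p | x :: w' => exists r, step x p r /\ reach r w' q end.

Lemma reach_cons p x w q : reach p (x :: w) q = exists r, step x p r /\ reach r w q.
Proof. by []. Qed.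
Lemma reach_nil p q : reach p [::] q = (q = p).
Proof. by []. Qed.

Lemma mem_wvS x s p q : (p, q) \in wv phiS x s <-> reach p (x :: s) q.
Proof.
elim: s x p => [|y s IH] x p.
- by rewrite /= inE; split=> [h|[r [h ->]]]; [exists q|].
- rewrite wv_cons; split.
  + by case/mem_relop => z [h1 /IH h2]; exists z; split=> //; rewrite inE in h1.
  + case=> r [h1 h2]; apply/mem_relop; exists r; split; first by rewrite inE.
    exact/IH.
Qed.

Lemma reach_full p w : reach p w (op p (psi w)).
Proof.
elim: w p => [|x w IH] p; first by rewrite reach_nil opN.
rewrite reach_cons; exists (op p (Some (phi x))); split; first by rewrite /step eqxx.
by rewrite -/(psiw phi (x :: w)) psiw_cons fmon_assoc; apply: IH.
Qed.

Lemma reach_cat p u r v q : reach p u r -> reach r v q -> reach p (u ++ v) q.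
Proof.
elim: u p => [|x u IH] p /=; first by move=> ->.
by case=> r' [h1 h2] h3; exists r'; split=> //; apply: IH h3.
Qed.

Lemma reach_start p x v q : P p -> reach None (x :: v) q -> reach p (x :: v) q.
Proof.
move=> Pp [r [h1 h2]]; exists r; split=> //.
have -> : r = Some (phi x).
  by case/orP: h1 => [/eqP ->|/andP [_ /eqP ->]].
by rewrite /step Pp eqxx orbT.
Qed.

Lemma reach_split p w q : reach p w q ->
  q = op p (psi w) \/ exists u m v, [/\ w = u ++ m ++ v, P (op p (psi u)),
     rmatch (RStar e) m & q = psi v].
Proof.
elim: w p => [|x w IH] p; first by rewrite reach_nil => ->; left; rewrite opN.
rewrite reach_cons; case=> r [/orP [/eqP Er|/andP [Pp /eqP Er]] /IH [Eq|[u [m [v [Ew Pu Hm Eq]]]]]]; subst r.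
- by left; rewrite Eq -/(psiw phi (x :: w)) psiw_cons fmon_assoc.
- right; exists (x :: u), m, v; split=> //; first by rewrite Ew.
  by rewrite psiw_cons fmon_assoc.
- right; exists [::], [::], (x :: w).
  split; [by []| by rewrite opN | exact: rm_star0 | by rewrite Eq psiw_cons].
- right; exists [::], ((x :: u) ++ m), v; split=> //.
  + by rewrite Ew catA.
  + by rewrite opN.
  + apply: rm_starS => //; apply/HP; by rewrite psiw_cons.
Qed.

Lemma star_reach w : rmatch (RStar e) w -> w = [::] \/ exists q, reach None w q /\ P q.
Proof.
intros H. remember (RStar e) as e' eqn:Ee. revert Ee.
induction H; intros Ee; try discriminate.
- by left.
- injection Ee as ->; clear IHrmatch1.
  have Hfull : forall x u, reach None (x :: u) (psi (x :: u)).
    by move=> x0 u0; have := reach_full None (x0 :: u0); rewrite opN'.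
  case: v H0 IHrmatch2 => [|y v] Hv IH.
  + rewrite cats0; case: u H => [|x u] H; first by left.
    by right; exists (psi (x :: u)); split; [apply: Hfull | exact/HP].
  + case: (IH erefl) => [//|[q [Hq Pq]]].
    case: u H => [|x u] H; first by right; exists q.
    right; exists q; split=> //; apply: (@reach_cat _ _ (psi (x :: u))); first exact: Hfull.
    exact: (reach_start ((HP _).1 H) Hq).
Qed.

Lemma recog_star_aux : recog (rmatch (RStar e)).
Proof.
exists (RelS (option S)), phiS,
  (fun (o : option (RelS (option S))) => if o is Some R then [exists q : option S, ((None, q) \in R) && P q] else true).
case=> [|x s]; first by split=> // _; exact: rm_star0.
split.
- case/star_reach => [//|[q [Hq Pq]]]; apply/existsP; exists q; rewrite Pq andbT.
  exact/mem_wvS.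
- case/existsP => q /andP [/mem_wvS Hq Pq].
  case: (reach_split Hq) => [Eq|[u [m [v [Ew Pu Hm Eq]]]]].
  + rewrite -[x :: s]cats0; apply: rm_starS; last exact: rm_star0.
    by apply/HP; rewrite Eq in Pq.
  + rewrite Ew; apply: rm_starS; first by apply/HP; rewrite opN' in Pu.
    apply: rmatch_star_cat => //; rewrite -[v]cats0; apply: rm_starS; last exact: rm_star0.
    by apply/HP; rewrite -Eq.
Qed.
End Star.

Lemma recog_star (X0 : Type) (e : rexp X0) : recog (rmatch e) -> recog (rmatch (RStar e)).
Proof. by case=> S [phi [P HP]]; exact: (recog_star_aux HP). Qed.

Lemma kleene (X : eqType) (e : rexp X) : recog (rmatch e).
Proof.
elim: e => [|| x | e1 IH1 e2 IH2 | e1 IH1 e2 IH2 | e1 IH1].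
- exact: recog_void.
- exact: recog_eps.
- exact: recog_lit.
- exact: recog_union.
- exact: recog_cat.
- exact: recog_star.
Qed.

Set Implicit Arguments. Unset Strict Implicit. Unset Printing Implicit Defensive.

Lemma agree_mul X (k g' h' g h : io X) N :
  (forall (S : fsg) (phi : X -> S), io_fun k phi = fsg_op (io_fun g' phi) (io_fun h' phi)) ->
  agree g' g N -> agree h' h N -> agree k (io_mul g h) N.
Proof.
move=> E; elim: N => [//|p N IH] /= [e1 a1] [e2 a2]; split; last exact: IH.
by rewrite E e1 e2.
Qed.

Theorem theorem3p4 (sig : Nhat -> Prop)
  (sig_unary : forall a, sig a -> nh_nonnat a)
  (sig_kappa : exists a, sig a /\ nh_is_omega_minus_one a)
  (X : finType) (K L : seq X -> Prop)
  (K_plus : plus_lang K) (L_plus : plus_lang L)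
  (K_rat : rational K) (L_rat : rational L) :
  forall f : io X,
    closure_in (in_sigma sig) (lang_img (cat_lang K L)) f <->
    set_mul (closure_in (in_sigma sig) (lang_img K))
            (closure_in (in_sigma sig) (lang_img L)) f.
Proof.
case: sig_kappa => a0 [sa0 ka0].
case: K_rat => eK HeK; case: L_rat => eL HeL.
have [SK [phiK [PK HK]]] := kleene eK.
have [SL [phiL [PL HL]]] := kleene eL.
have HK' : forall x s, K (x :: s) <-> PK (Some (wv phiK x s)).
  by move=> x s; rewrite HeK HK.
have HL' : forall x s, L (x :: s) <-> PL (Some (wv phiL x s)).
  by move=> x s; rewrite HeL HL.
move=> f; split.
- case=> If Hcl.
  pose Phi := fun x => (phiK x, phiL x) : prodS SK SL.
  have [g [[x [s [[u [v [Ku [Lv Euv]]]] ->]]] [Eg _]]] :=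
    Hcl [:: existT _ (CutS (prodS SK SL)) (cutphi Phi)].
  case: u Ku Euv => [|x1 s1] Ku Euv; first by case: (K_plus _ Ku).
  case: v Lv Euv => [|x2 s2] Lv Euv; first by case: (L_plus _ Lv).
  have Hc : (wv Phi x1 s1, wv Phi x2 s2) \in (io_fun f (cutphi Phi)).2.
    rewrite -Eg; apply: (proj2 (wcut Phi x s _ _)).
    by exists x1, s1, x2, s2.
  have [G [H [iG iH EGH EG EH]]] := core sig_unary sa0 ka0 If Hc.
  exists G, H; split; last split=> //.
  + apply: (clos_char1 sig_unary HK') => //.
    by rewrite -(io_fst G phiK phiL) EG /wv io_fst; apply/HK'.
  + apply: (clos_char1 sig_unary HL') => //.
    by rewrite -(io_snd H phiK phiL) EH /wv io_snd; apply/HL'.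
- case=> g [h [[ig Cg] [[ih Ch] ->]]]; split; first by constructor.
  move=> N; have [g' [[x [s [Ks ->]]] Ag]] := Cg N.
  have [h' [[y [t [Lt ->]]] Ah]] := Ch N.
  exists (io_word x (s ++ y :: t)); split.
  + exists x, (s ++ y :: t); split=> //.
    by exists (x :: s), (y :: t).
  + apply: agree_mul Ag Ah => S phi; exact: wv_cat.
Qed.
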